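(* Define the integer sequence $(w_n)_{n\geq 1}$ by $w_1=1$ and, for $n\geq 1$, $$w_{n+1}=\begin{cases}\left\lfloor \sqrt{2}\,\left(w_n+1-\frac{\pi^2}{e^3}\right)\right\rfloor, & n \text{ odd},\\ \left\lfloor \sqrt{2}\,\left(w_n+\tfrac12\right)\right\rfloor, & n \text{ even}.\end{cases}$$ Then for every $n\geq 31$, $w_{2n+1}-2w_{2n-1}$ equals the $(n+1)$th binary digit of $759250125\sqrt{2}$.
   Context: $\lfloor x\rfloor$ denotes the greatest integer $\leq x$. Binary digits of a positive real number are counted from the most significant one: writing $759250125\sqrt{2}=\sum_{j\geq 1} b_j\,2^{30-(j-1)}$ with $b_j\in\{0,1\}$ and $b_1=1$ (the integer part of $759250125\sqrt{2}$ lies in $[2^{30},2^{31})$), the $j$th binary digit is $b_j$. *)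

(* Defs.v *)
From Stdlib Require Import Reals ZArith.
Open Scope R_scope.

(* floor x : the greatest integer <= x.  [up x] is the unique integer with
   x < IZR (up x) <= x + 1, so [up x - 1] is the floor. *)
Definition floorR (x : R) : Z := (up x - 1)%Z.

Definition wstep (n : nat) (x : Z) : Z :=
  if Nat.odd n
  then floorR (sqrt 2 * (IZR x + 1 - PI ^ 2 / exp 3))
  else floorR (sqrt 2 * (IZR x + / 2)).

(* w 1 = 1, w (n+1) = wstep n (w n) for n >= 1; w 0 is an unused junk value. *)
Fixpoint w (n : nat) : Z :=
  match n with
  | O => 0%Z
  | S O => 1%Z
  | S (S k as m) => wstep m (w m)
  end.

(* The j-th binary digit (j >= 1) of x, where x = sum_{j>=1} b_j 2^(30-(j-1)):
   b_j = floor (x / 2^(31-j)) mod 2. *)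
Definition bin_digit (x : R) (j : nat) : Z :=
  Z.modulo (floorR (x * powerRZ 2 (Z.of_nat j - 31))) 2.

Definition xi : R := 759250125 * sqrt 2.

(* Main.v *)
Require Import Defs.
From Stdlib Require Import Reals ZArith Lra Lia Psatz Machin.
Open Scope R_scope.

Lemma floorR_spec x z : IZR z <= x < IZR z + 1 -> floorR x = z.
Proof.
  intros [H1 H2]. unfold floorR.
  assert (up x = (z+1)%Z).
  { symmetry. apply tech_up; rewrite plus_IZR; lra. }
  lia.
Qed.

Lemma floorR_prop x : IZR (floorR x) <= x < IZR (floorR x) + 1.
Proof.
  unfold floorR. rewrite minus_IZR. destruct (archimed x) as [H1 H2]. lra.
Qed.

Lemma s2 : sqrt 2 * sqrt 2 = 2.
Proof. apply sqrt_sqrt; lra. Qed.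

Lemma s_bounds : (282842712474619/200000000000000) < sqrt 2 < (176776695296637/125000000000000).
Proof. pose proof s2. pose proof (sqrt_pos 2). split; nra. Qed.

Lemma PI_bounds : 314159/100000 < PI < 314160/100000.
Proof.
  pose proof (PI_2_3_7_ineq 2) as H. simpl in H.
  unfold tg_alt, PI_2_3_7_tg, Ratan_seq in H. simpl in H. lra.
Qed.

Lemma sq_step x L U L' U' : 0 <= L -> L <= x <= U -> L' <= L*L -> U*U <= U' -> L' <= x*x <= U'.
Proof. intros. split; nra. Qed.

Lemma exp_bounds : (2507936639977/125000000000) <= exp 3 <= (5026906629339/250000000000).
Proof.
  assert (HH12 : (4099/4096) <= exp (3/4096) <= (4096/4093)).
  { pose proof (exp_ineq1_le (3/4096)).
    pose proof (exp_ineq1_le (-(3/4096))).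
    assert (exp (3/4096) * exp (-(3/4096)) = 1).
    { rewrite <- exp_plus. replace (3/4096 + - (3/4096)) with 0 by ring. apply exp_0. }
    assert (exp (3/4096) * (1 - 3/4096) <= exp (3/4096) * exp (-(3/4096))).
    { apply Rmult_le_compat_l. left; apply exp_pos. lra. }
    lra. }
  assert (HH11 : (1001465380191/1000000000000) <= exp (3/2048) <= (1001466454649/1000000000000)).
  { replace (exp (3/2048)) with (exp (3/4096) * exp (3/4096)) by (rewrite <- exp_plus; f_equal; field).
    apply (sq_step _ (4099/4096) (4096/4093)); [lra|exact HH12|lra|lra]. }
  assert (HH10 : (1002932907721/1000000000000) <= exp (3/1024) <= (250733764947/250000000000)).
  { replace (exp (3/1024)) with (exp (3/2048) * exp (3/2048)) by (rewrite <- exp_plus; f_equal; field).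
    apply (sq_step _ (1001465380191/1000000000000) (1001466454649/1000000000000)); [lra|exact HH11|lra|lra]. }
  assert (HH9 : (1005874417389/1000000000000) <= exp (3/512) <= (125734841769/125000000000)).
  { replace (exp (3/512)) with (exp (3/1024) * exp (3/1024)) by (rewrite <- exp_plus; f_equal; field).
    apply (sq_step _ (1002932907721/1000000000000) (250733764947/250000000000)); [lra|exact HH10|lra|lra]. }
  assert (HH8 : (1011783343557/1000000000000) <= exp (3/256) <= (50589601391/50000000000)).
  { replace (exp (3/256)) with (exp (3/512) * exp (3/512)) by (rewrite <- exp_plus; f_equal; field).
    apply (sq_step _ (1005874417389/1000000000000) (125734841769/125000000000)); [lra|exact HH9|lra|lra]. }
  assert (HH7 : (1023705534299/1000000000000) <= exp (3/128) <= (1023723107561/1000000000000)).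
  { replace (exp (3/128)) with (exp (3/256) * exp (3/256)) by (rewrite <- exp_plus; f_equal; field).
    apply (sq_step _ (1011783343557/1000000000000) (50589601391/50000000000)); [lra|exact HH8|lra|lra]. }
  assert (HH6 : (523986510477/500000000000) <= exp (3/64) <= (209601800191/200000000000)).
  { replace (exp (3/64)) with (exp (3/128) * exp (3/128)) by (rewrite <- exp_plus; f_equal; field).
    apply (sq_step _ (1023705534299/1000000000000) (1023723107561/1000000000000)); [lra|exact HH7|lra|lra]. }
  assert (HH5 : (1098247452647/1000000000000) <= exp (3/32) <= (1098322866083/1000000000000)).
  { replace (exp (3/32)) with (exp (3/64) * exp (3/64)) by (rewrite <- exp_plus; f_equal; field).
    apply (sq_step _ (523986510477/500000000000) (209601800191/200000000000)); [lra|exact HH6|lra|lra]. }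
  assert (HH4 : (241229493449/200000000000) <= exp (3/16) <= (1206313118161/1000000000000)).
  { replace (exp (3/16)) with (exp (3/32) * exp (3/32)) by (rewrite <- exp_plus; f_equal; field).
    apply (sq_step _ (1098247452647/1000000000000) (1098322866083/1000000000000)); [lra|exact HH5|lra|lra]. }
  assert (HH3 : (1454791712741/1000000000000) <= exp (3/8) <= (181898917381/125000000000)).
  { replace (exp (3/8)) with (exp (3/16) * exp (3/16)) by (rewrite <- exp_plus; f_equal; field).
    apply (sq_step _ (241229493449/200000000000) (1206313118161/1000000000000)); [lra|exact HH4|lra|lra]. }
  assert (HH2 : (2116418927459/1000000000000) <= exp (3/4) <= (2117581833241/1000000000000)).
  { replace (exp (3/4)) with (exp (3/8) * exp (3/8)) by (rewrite <- exp_plus; f_equal; field).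
    apply (sq_step _ (1454791712741/1000000000000) (181898917381/125000000000)); [lra|exact HH3|lra|lra]. }
  assert (HH1 : (2239614538253/500000000000) <= exp (3/2) <= (4484152820473/1000000000000)).
  { replace (exp (3/2)) with (exp (3/4) * exp (3/4)) by (rewrite <- exp_plus; f_equal; field).
    apply (sq_step _ (2116418927459/1000000000000) (2117581833241/1000000000000)); [lra|exact HH2|lra|lra]. }
  assert (HH0 : (2507936639977/125000000000) <= exp (3/1) <= (5026906629339/250000000000)).
  { replace (exp (3/1)) with (exp (3/2) * exp (3/2)) by (rewrite <- exp_plus; f_equal; field).
    apply (sq_step _ (2239614538253/500000000000) (4484152820473/1000000000000)); [lra|exact HH1|lra|lra]. }
  replace (3/1) with 3 in HH0 by field. exact HH0.
Qed.

Definition cc := 1 - PI^2/exp 3.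

Lemma cc_bounds : 508/1000 <= cc <= 5092/10000.
Proof.
  pose proof exp_bounds. pose proof PI_bounds.
  set (E := exp 3) in *. unfold cc. fold E.
  set (q := PI^2/E).
  assert (HqE : q * E = PI^2) by (unfold q; field; lra).
  assert (Hq : 0 < q) by (unfold q; apply Rdiv_lt_0_compat; nra).
  assert (q * (2507936639977/125000000000) <= q * E) by (apply Rmult_le_compat_l; lra).
  assert (q * E <= q * (5026906629339/250000000000)) by (apply Rmult_le_compat_l; lra).
  assert (314159/100000 * (314159/100000) <= PI^2 <= 314160/100000 * (314160/100000)) by (split; nra).
  split; lra.
Qed.

Lemma scc_bounds : (282842712474619/200000000000000) * (508/1000) <= sqrt 2 * cc <= (176776695296637/125000000000000) * (5092/10000).
Proof.
  pose proof s_bounds. pose proof cc_bounds. split.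
  - apply Rmult_le_compat; lra.
  - apply Rmult_le_compat; lra.
Qed.

Lemma wodd m x z : Nat.odd m = true -> (0 <= x)%Z ->
  IZR z <= (282842712474619/200000000000000) * IZR x + (282842712474619/200000000000000) * (508/1000) ->
  (176776695296637/125000000000000) * IZR x + (176776695296637/125000000000000) * (5092/10000) < IZR z + 1 -> wstep m x = z.
Proof.
  intros Hm Hx H1 H2. unfold wstep; rewrite Hm. apply floorR_spec.
  pose proof s_bounds. pose proof scc_bounds. apply IZR_le in Hx.
  replace (sqrt 2 * (IZR x + 1 - PI ^ 2 / exp 3)) with (sqrt 2 * IZR x + sqrt 2 * cc) by (unfold cc; ring).
  assert ((282842712474619/200000000000000) * IZR x <= sqrt 2 * IZR x <= (176776695296637/125000000000000) * IZR x) by (split; apply Rmult_le_compat_r; lra).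
  lra.
Qed.

Lemma weven m x z : Nat.odd m = false -> (0 <= x)%Z ->
  IZR z <= (282842712474619/200000000000000) * IZR x + (282842712474619/200000000000000) / 2 ->
  (176776695296637/125000000000000) * IZR x + (176776695296637/125000000000000) / 2 < IZR z + 1 -> wstep m x = z.
Proof.
  intros Hm Hx H1 H2. unfold wstep; rewrite Hm. apply floorR_spec.
  pose proof s_bounds. apply IZR_le in Hx.
  assert ((282842712474619/200000000000000) * IZR x <= sqrt 2 * IZR x <= (176776695296637/125000000000000) * IZR x) by (split; apply Rmult_le_compat_r; lra).
  lra.
Qed.

Lemma w1 : w 1 = 1%Z. Proof. reflexivity. Qed.

Lemma w2 : w 2 = 2%Z.
Proof. change (w 2) with (wstep 1 (w 1)). rewrite w1. apply wodd; [reflexivity|lia|lra|lra]. Qed.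
Lemma w3 : w 3 = 3%Z.
Proof. change (w 3) with (wstep 2 (w 2)). rewrite w2. apply weven; [reflexivity|lia|lra|lra]. Qed.
Lemma w4 : w 4 = 4%Z.
Proof. change (w 4) with (wstep 3 (w 3)). rewrite w3. apply wodd; [reflexivity|lia|lra|lra]. Qed.
Lemma w5 : w 5 = 6%Z.
Proof. change (w 5) with (wstep 4 (w 4)). rewrite w4. apply weven; [reflexivity|lia|lra|lra]. Qed.
Lemma w6 : w 6 = 9%Z.
Proof. change (w 6) with (wstep 5 (w 5)). rewrite w5. apply wodd; [reflexivity|lia|lra|lra]. Qed.
Lemma w7 : w 7 = 13%Z.
Proof. change (w 7) with (wstep 6 (w 6)). rewrite w6. apply weven; [reflexivity|lia|lra|lra]. Qed.
Lemma w8 : w 8 = 19%Z.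
Proof. change (w 8) with (wstep 7 (w 7)). rewrite w7. apply wodd; [reflexivity|lia|lra|lra]. Qed.
Lemma w9 : w 9 = 27%Z.
Proof. change (w 9) with (wstep 8 (w 8)). rewrite w8. apply weven; [reflexivity|lia|lra|lra]. Qed.
Lemma w10 : w 10 = 38%Z.
Proof. change (w 10) with (wstep 9 (w 9)). rewrite w9. apply wodd; [reflexivity|lia|lra|lra]. Qed.
Lemma w11 : w 11 = 54%Z.
Proof. change (w 11) with (wstep 10 (w 10)). rewrite w10. apply weven; [reflexivity|lia|lra|lra]. Qed.
Lemma w12 : w 12 = 77%Z.
Proof. change (w 12) with (wstep 11 (w 11)). rewrite w11. apply wodd; [reflexivity|lia|lra|lra]. Qed.
Lemma w13 : w 13 = 109%Z.
Proof. change (w 13) with (wstep 12 (w 12)). rewrite w12. apply weven; [reflexivity|lia|lra|lra]. Qed.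
Lemma w14 : w 14 = 154%Z.
Proof. change (w 14) with (wstep 13 (w 13)). rewrite w13. apply wodd; [reflexivity|lia|lra|lra]. Qed.
Lemma w15 : w 15 = 218%Z.
Proof. change (w 15) with (wstep 14 (w 14)). rewrite w14. apply weven; [reflexivity|lia|lra|lra]. Qed.
Lemma w16 : w 16 = 309%Z.
Proof. change (w 16) with (wstep 15 (w 15)). rewrite w15. apply wodd; [reflexivity|lia|lra|lra]. Qed.
Lemma w17 : w 17 = 437%Z.
Proof. change (w 17) with (wstep 16 (w 16)). rewrite w16. apply weven; [reflexivity|lia|lra|lra]. Qed.
Lemma w18 : w 18 = 618%Z.
Proof. change (w 18) with (wstep 17 (w 17)). rewrite w17. apply wodd; [reflexivity|lia|lra|lra]. Qed.
Lemma w19 : w 19 = 874%Z.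
Proof. change (w 19) with (wstep 18 (w 18)). rewrite w18. apply weven; [reflexivity|lia|lra|lra]. Qed.
Lemma w20 : w 20 = 1236%Z.
Proof. change (w 20) with (wstep 19 (w 19)). rewrite w19. apply wodd; [reflexivity|lia|lra|lra]. Qed.
Lemma w21 : w 21 = 1748%Z.
Proof. change (w 21) with (wstep 20 (w 20)). rewrite w20. apply weven; [reflexivity|lia|lra|lra]. Qed.
Lemma w22 : w 22 = 2472%Z.
Proof. change (w 22) with (wstep 21 (w 21)). rewrite w21. apply wodd; [reflexivity|lia|lra|lra]. Qed.
Lemma w23 : w 23 = 3496%Z.
Proof. change (w 23) with (wstep 22 (w 22)). rewrite w22. apply weven; [reflexivity|lia|lra|lra]. Qed.
Lemma w24 : w 24 = 4944%Z.
Proof. change (w 24) with (wstep 23 (w 23)). rewrite w23. apply wodd; [reflexivity|lia|lra|lra]. Qed.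
Lemma w25 : w 25 = 6992%Z.
Proof. change (w 25) with (wstep 24 (w 24)). rewrite w24. apply weven; [reflexivity|lia|lra|lra]. Qed.
Lemma w26 : w 26 = 9888%Z.
Proof. change (w 26) with (wstep 25 (w 25)). rewrite w25. apply wodd; [reflexivity|lia|lra|lra]. Qed.
Lemma w27 : w 27 = 13984%Z.
Proof. change (w 27) with (wstep 26 (w 26)). rewrite w26. apply weven; [reflexivity|lia|lra|lra]. Qed.
Lemma w28 : w 28 = 19777%Z.
Proof. change (w 28) with (wstep 27 (w 27)). rewrite w27. apply wodd; [reflexivity|lia|lra|lra]. Qed.
Lemma w29 : w 29 = 27969%Z.
Proof. change (w 29) with (wstep 28 (w 28)). rewrite w28. apply weven; [reflexivity|lia|lra|lra]. Qed.
Lemma w30 : w 30 = 39554%Z.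
Proof. change (w 30) with (wstep 29 (w 29)). rewrite w29. apply wodd; [reflexivity|lia|lra|lra]. Qed.
Lemma w31 : w 31 = 55938%Z.
Proof. change (w 31) with (wstep 30 (w 30)). rewrite w30. apply weven; [reflexivity|lia|lra|lra]. Qed.
Lemma w32 : w 32 = 79108%Z.
Proof. change (w 32) with (wstep 31 (w 31)). rewrite w31. apply wodd; [reflexivity|lia|lra|lra]. Qed.
Lemma w33 : w 33 = 111876%Z.
Proof. change (w 33) with (wstep 32 (w 32)). rewrite w32. apply weven; [reflexivity|lia|lra|lra]. Qed.
Lemma w34 : w 34 = 158217%Z.
Proof. change (w 34) with (wstep 33 (w 33)). rewrite w33. apply wodd; [reflexivity|lia|lra|lra]. Qed.
Lemma w35 : w 35 = 223753%Z.
Proof. change (w 35) with (wstep 34 (w 34)). rewrite w34. apply weven; [reflexivity|lia|lra|lra]. Qed.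
Lemma w36 : w 36 = 316435%Z.
Proof. change (w 36) with (wstep 35 (w 35)). rewrite w35. apply wodd; [reflexivity|lia|lra|lra]. Qed.
Lemma w37 : w 37 = 447507%Z.
Proof. change (w 37) with (wstep 36 (w 36)). rewrite w36. apply weven; [reflexivity|lia|lra|lra]. Qed.
Lemma w38 : w 38 = 632871%Z.
Proof. change (w 38) with (wstep 37 (w 37)). rewrite w37. apply wodd; [reflexivity|lia|lra|lra]. Qed.
Lemma w39 : w 39 = 895015%Z.
Proof. change (w 39) with (wstep 38 (w 38)). rewrite w38. apply weven; [reflexivity|lia|lra|lra]. Qed.
Lemma w40 : w 40 = 1265743%Z.
Proof. change (w 40) with (wstep 39 (w 39)). rewrite w39. apply wodd; [reflexivity|lia|lra|lra]. Qed.
Lemma w41 : w 41 = 1790031%Z.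
Proof. change (w 41) with (wstep 40 (w 40)). rewrite w40. apply weven; [reflexivity|lia|lra|lra]. Qed.
Lemma w42 : w 42 = 2531486%Z.
Proof. change (w 42) with (wstep 41 (w 41)). rewrite w41. apply wodd; [reflexivity|lia|lra|lra]. Qed.
Lemma w43 : w 43 = 3580062%Z.
Proof. change (w 43) with (wstep 42 (w 42)). rewrite w42. apply weven; [reflexivity|lia|lra|lra]. Qed.
Lemma w44 : w 44 = 5062972%Z.
Proof. change (w 44) with (wstep 43 (w 43)). rewrite w43. apply wodd; [reflexivity|lia|lra|lra]. Qed.
Lemma w45 : w 45 = 7160124%Z.
Proof. change (w 45) with (wstep 44 (w 44)). rewrite w44. apply weven; [reflexivity|lia|lra|lra]. Qed.
Lemma w46 : w 46 = 10125945%Z.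
Proof. change (w 46) with (wstep 45 (w 45)). rewrite w45. apply wodd; [reflexivity|lia|lra|lra]. Qed.
Lemma w47 : w 47 = 14320249%Z.
Proof. change (w 47) with (wstep 46 (w 46)). rewrite w46. apply weven; [reflexivity|lia|lra|lra]. Qed.
Lemma w48 : w 48 = 20251891%Z.
Proof. change (w 48) with (wstep 47 (w 47)). rewrite w47. apply wodd; [reflexivity|lia|lra|lra]. Qed.
Lemma w49 : w 49 = 28640499%Z.
Proof. change (w 49) with (wstep 48 (w 48)). rewrite w48. apply weven; [reflexivity|lia|lra|lra]. Qed.
Lemma w50 : w 50 = 40503782%Z.
Proof. change (w 50) with (wstep 49 (w 49)). rewrite w49. apply wodd; [reflexivity|lia|lra|lra]. Qed.
Lemma w51 : w 51 = 57280998%Z.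
Proof. change (w 51) with (wstep 50 (w 50)). rewrite w50. apply weven; [reflexivity|lia|lra|lra]. Qed.
Lemma w52 : w 52 = 81007564%Z.
Proof. change (w 52) with (wstep 51 (w 51)). rewrite w51. apply wodd; [reflexivity|lia|lra|lra]. Qed.
Lemma w53 : w 53 = 114561996%Z.
Proof. change (w 53) with (wstep 52 (w 52)). rewrite w52. apply weven; [reflexivity|lia|lra|lra]. Qed.
Lemma w54 : w 54 = 162015129%Z.
Proof. change (w 54) with (wstep 53 (w 53)). rewrite w53. apply wodd; [reflexivity|lia|lra|lra]. Qed.
Lemma w55 : w 55 = 229123993%Z.
Proof. change (w 55) with (wstep 54 (w 54)). rewrite w54. apply weven; [reflexivity|lia|lra|lra]. Qed.
Lemma w56 : w 56 = 324030259%Z.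
Proof. change (w 56) with (wstep 55 (w 55)). rewrite w55. apply wodd; [reflexivity|lia|lra|lra]. Qed.
Lemma w57 : w 57 = 458247987%Z.
Proof. change (w 57) with (wstep 56 (w 56)). rewrite w56. apply weven; [reflexivity|lia|lra|lra]. Qed.
Lemma w58 : w 58 = 648060518%Z.
Proof. change (w 58) with (wstep 57 (w 57)). rewrite w57. apply wodd; [reflexivity|lia|lra|lra]. Qed.
Lemma w59 : w 59 = 916495974%Z.
Proof. change (w 59) with (wstep 58 (w 58)). rewrite w58. apply weven; [reflexivity|lia|lra|lra]. Qed.
Lemma w60 : w 60 = 1296121037%Z.
Proof. change (w 60) with (wstep 59 (w 59)). rewrite w59. apply wodd; [reflexivity|lia|lra|lra]. Qed.
Lemma w61 : w 61 = 1832991949%Z.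
Proof. change (w 61) with (wstep 60 (w 60)). rewrite w60. apply weven; [reflexivity|lia|lra|lra]. Qed.


Lemma w_S m : (1 <= m)%nat -> w (S m) = wstep m (w m).
Proof. intros H. destruct m; [lia|reflexivity]. Qed.

Definition M (k : nat) : Z := (759250125 * 2 ^ Z.of_nat k)%Z.

Lemma M_S k : M (S k) = (2 * M k)%Z.
Proof. unfold M. rewrite Nat2Z.inj_succ, Z.pow_succ_r by lia. ring. Qed.

Lemma IZR_M k : IZR (M k) = 759250125 * 2 ^ k.
Proof.
  induction k as [|k IH].
  - unfold M. simpl. ring.
  - rewrite M_S, mult_IZR, IH. simpl. ring.
Qed.

Lemma key_odd (Mz : Z) :
  floorR (sqrt 2 * (IZR (Mz + floorR (sqrt 2 * IZR Mz)) + 1 - PI ^ 2 / exp 3))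
  = (2 * Mz + floorR (sqrt 2 * IZR Mz))%Z.
Proof.
  set (F := floorR (sqrt 2 * IZR Mz)).
  pose proof (floorR_prop (sqrt 2 * IZR Mz)) as HF. fold F in HF.
  pose proof s_bounds. pose proof scc_bounds.
  set (phi := sqrt 2 * IZR Mz - IZR F).
  assert (Hphi : phi = sqrt 2 * IZR Mz - IZR F) by reflexivity.
  assert (E1 : sqrt 2 * IZR F = 2 * IZR Mz - sqrt 2 * phi).
  { unfold phi. replace (2 * IZR Mz) with (sqrt 2 * sqrt 2 * IZR Mz) by (rewrite s2; ring). ring. }
  apply floorR_spec.
  replace (sqrt 2 * (IZR (Mz + F) + 1 - PI ^ 2 / exp 3))
    with (sqrt 2 * IZR Mz + sqrt 2 * IZR F + sqrt 2 * cc) by (unfold cc; rewrite plus_IZR; ring).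
  rewrite E1, plus_IZR, mult_IZR.
  assert (P1 : 0 <= (1 - phi) * (sqrt 2 - 1)) by (apply Rmult_le_pos; lra).
  assert (P2 : 0 <= phi * (sqrt 2 - 1)) by (apply Rmult_le_pos; lra).
  unfold phi in *. split; nra.
Qed.

Lemma key_even (Mz : Z) :
  floorR (sqrt 2 * (IZR (2 * Mz + floorR (sqrt 2 * IZR Mz)) + / 2))
  = (2 * Mz + floorR (sqrt 2 * IZR (2 * Mz)))%Z.
Proof.
  set (F := floorR (sqrt 2 * IZR Mz)).
  set (G := floorR (sqrt 2 * IZR (2 * Mz))).
  pose proof (floorR_prop (sqrt 2 * IZR Mz)) as HF. fold F in HF.
  pose proof (floorR_prop (sqrt 2 * IZR (2 * Mz))) as HG. fold G in HG.
  rewrite mult_IZR in HG.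
  replace (sqrt 2 * (2 * IZR Mz)) with (2 * (sqrt 2 * IZR Mz)) in HG by ring.
  pose proof s_bounds.
  set (phi := sqrt 2 * IZR Mz - IZR F) in *.
  assert (Hphi : phi = sqrt 2 * IZR Mz - IZR F) by reflexivity.
  assert (E1 : sqrt 2 * IZR F = 2 * IZR Mz - sqrt 2 * phi).
  { unfold phi. replace (2 * IZR Mz) with (sqrt 2 * sqrt 2 * IZR Mz) by (rewrite s2; ring). ring. }
  assert (h1 : (2 * F - 1 < G)%Z).
  { apply lt_IZR. rewrite minus_IZR, mult_IZR. unfold phi in *. lra. }
  assert (h2 : (G < 2 * F + 2)%Z).
  { apply lt_IZR. rewrite plus_IZR, mult_IZR. unfold phi in *. lra. }
  apply floorR_spec.
  replace (sqrt 2 * (IZR (2 * Mz + F) + / 2))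
    with (2 * (sqrt 2 * IZR Mz) + sqrt 2 * IZR F + sqrt 2 / 2) by (rewrite plus_IZR, mult_IZR; field).
  rewrite E1, plus_IZR, mult_IZR.
  assert (HX : sqrt 2 * IZR Mz = IZR F + phi) by (unfold phi; ring).
  rewrite HX in HG |- *.
  assert (Hc : G = (2 * F)%Z \/ G = (2 * F + 1)%Z) by lia.
  destruct Hc as [Hc|Hc]; rewrite Hc in HG |- *;
    rewrite ?plus_IZR, mult_IZR in HG |- *.
  - assert (P1 : 0 <= (2 - sqrt 2) * phi) by (apply Rmult_le_pos; lra).
    assert (P2 : 0 < (2 - sqrt 2) * (1/2 - phi)) by (apply Rmult_lt_0_compat; lra).
    split; nra.
  - assert (P1 : 0 <= (2 - sqrt 2) * (phi - 1/2)) by (apply Rmult_le_pos; lra).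
    assert (P2 : 0 < (2 - sqrt 2) * (1 - phi)) by (apply Rmult_lt_0_compat; lra).
    split; nra.
Qed.

Lemma odd_61 k : Nat.odd (2 * k + 61) = true.
Proof. rewrite Nat.odd_add, Nat.odd_mul. reflexivity. Qed.

Lemma odd_62 k : Nat.odd (S (2 * k + 61)) = false.
Proof. rewrite Nat.odd_succ, Nat.even_add, Nat.even_mul. reflexivity. Qed.

Lemma step k : w (2 * k + 61) = (M k + floorR (sqrt 2 * IZR (M k)))%Z ->
  w (2 * k + 63) = (2 * M k + floorR (sqrt 2 * IZR (2 * M k)))%Z.
Proof.
  intros Hw.
  replace (2 * k + 63)%nat with (S (S (2 * k + 61))) by lia.
  rewrite w_S by lia. rewrite (w_S (2 * k + 61)) by lia.
  rewrite Hw. unfold wstep. rewrite odd_61, odd_62.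
  rewrite key_odd. apply key_even.
Qed.

Lemma base : floorR (sqrt 2 * IZR (M 0)) = 1073741824%Z.
Proof.
  apply floorR_spec. rewrite IZR_M. pose proof s_bounds. simpl. lra.
Qed.

Lemma inv k : w (2 * k + 61) = (M k + floorR (sqrt 2 * IZR (M k)))%Z.
Proof.
  induction k as [|k IH].
  - rewrite base. change (2 * 0 + 61)%nat with 61%nat. rewrite w61. reflexivity.
  - replace (2 * S k + 61)%nat with (2 * k + 63)%nat by lia.
    rewrite (step k IH), M_S. reflexivity.
Qed.

Theorem corollary3p3 :
  forall n : nat, (31 <= n)%nat ->
    (w (2 * n + 1) - 2 * w (2 * n - 1))%Z = bin_digit xi (n + 1).
Proof.
  intros n Hn.
  set (k := (n - 31)%nat).
  replace (2 * n + 1)%nat with (2 * k + 63)%nat by (unfold k; lia).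
  replace (2 * n - 1)%nat with (2 * k + 61)%nat by (unfold k; lia).
  rewrite (step k (inv k)), (inv k).
  unfold bin_digit, xi.
  replace (Z.of_nat (n + 1) - 31)%Z with (Z.of_nat (S k)) by (unfold k; lia).
  rewrite <- pow_powerRZ.
  replace (759250125 * sqrt 2 * 2 ^ S k) with (sqrt 2 * IZR (2 * M k))
    by (rewrite mult_IZR, IZR_M; change (2 ^ S k) with (2 * 2 ^ k); ring).
  set (F := floorR (sqrt 2 * IZR (M k))).
  set (G := floorR (sqrt 2 * IZR (2 * M k))).
  pose proof (floorR_prop (sqrt 2 * IZR (M k))) as HF. fold F in HF.
  pose proof (floorR_prop (sqrt 2 * IZR (2 * M k))) as HG. fold G in HG.
  rewrite mult_IZR in HG.
  assert (h1 : (2 * F - 1 < G)%Z).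
  { apply lt_IZR. rewrite minus_IZR, mult_IZR. lra. }
  assert (h2 : (G < 2 * F + 2)%Z).
  { apply lt_IZR. rewrite plus_IZR, mult_IZR. lra. }
  assert (Hc : G = (2 * F)%Z \/ G = (2 * F + 1)%Z) by lia.
  destruct Hc as [Hc|Hc]; rewrite Hc; clear -Hc; Z.to_euclidean_division_equations; lia.
Qed.
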